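(* Let $k=2r+1$ with $r\ge1$, $G=BS(1,k)$, and $m>0$. Let \[\mathcal{A}_m=\{a^{x_0}ta^{x_1}t\cdots a^{x_{m-1}}t\mid x_i\in\mathbb{Z},\ |x_i|\le r\}\setminus\{(a^{-r}t)^m\}.\] Then two words in $\mathcal{A}_m$ represent conjugate elements of $G$ if and only if they are cyclic permutations of each other, and every word in $\mathcal{A}_m$ is a conjugacy geodesic.
   Context: $BS(1,k)=\langle a,t\mid tat^{-1}=a^k\rangle$. $a^x$ denotes $|x|$ copies of $a$ or $a^{-1}$ according to the sign of $x$. Word length is with respect to $\{a,t\}$. A word is a conjugacy geodesic for the conjugacy class of the element it represents if it is a geodesic word and the element it represents has minimal length among all elements of its conjugacy class. *)

(* Defs.v *)
From mathcomp Require Import all_boot all_order all_algebra.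
Set Implicit Arguments. Unset Strict Implicit. Unset Printing Implicit Defensive.
Import GRing.Theory Num.Theory.

Inductive letter := LA | LAi | LT | LTi.

Definition word := seq letter.

Definition inv_letter (x : letter) : letter :=
  match x with LA => LAi | LAi => LA | LT => LTi | LTi => LT end.

Definition inv_word (w : word) : word := rev (map inv_letter w).

Definition apow (x : int) : word :=
  if (0 <= x)%R then nseq (absz x) LA else nseq (absz x) LAi.

Definition relator (k : nat) : word := [:: LT; LA; LTi] ++ nseq k LAi.

(* Equality in BS(1,k) = <a,t | t a t^-1 = a^k>: the equivalence relation on
   words generated by inserting/deleting trivial relators x x^-1 and the
   defining relator anywhere in a word. *)
Inductive bs_eq (k : nat) : word -> word -> Prop :=
| bs_refl w : bs_eq k w w
| bs_sym u v : bs_eq k u v -> bs_eq k v u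
| bs_trans u v w : bs_eq k u v -> bs_eq k v w -> bs_eq k u w
| bs_free u v x : bs_eq k (u ++ [:: x; inv_letter x] ++ v) (u ++ v)
| bs_rel u v : bs_eq k (u ++ relator k ++ v) (u ++ v).

Definition bs_conj (k : nat) (w v : word) : Prop :=
  exists u : word, bs_eq k (u ++ w ++ inv_word u) v.

Definition geodesic (k : nat) (w : word) : Prop :=
  forall w', bs_eq k w w' -> size w <= size w'.

Definition conj_geodesic (k : nat) (w : word) : Prop :=
  geodesic k w /\ forall w', bs_conj k w w' -> size w <= size w'.

Definition cyclic_perm (w v : word) : Prop := exists i : nat, rot i w = v.

Definition xword (xs : seq int) : word := flatten [seq apow x ++ [:: LT] | x <- xs].

Definition Aset (r m : nat) (w : word) : Prop :=
  (exists xs : seq int,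
      size xs = m /\ (forall x, x \in xs -> (`|x| <= r%:Z)%R) /\ w = xword xs)
  /\ w <> flatten (nseq m (apow (- r%:Z)%R ++ [:: LT])).

(* Main.v *)
Require Import Defs.
From mathcomp Require Import all_boot all_order all_algebra.
From mathcomp Require Import zify ring lra.
Set Implicit Arguments. Unset Strict Implicit. Unset Printing Implicit Defensive.
Import Order.TTheory GRing.Theory Num.Theory.


Lemma bs_cong k u v p q : bs_eq k u v -> bs_eq k (p ++ u ++ q) (p ++ v ++ q).
Proof.
elim=> [w|u' v' _ IH|u' v' w' _ IH1 _ IH2|u' v' x|u' v'].
- exact: bs_refl.
- exact: bs_sym.
- exact: bs_trans IH2.
- have -> : p ++ (u' ++ [:: x; inv_letter x] ++ v') ++ q = (p ++ u') ++ [:: x; inv_letter x] ++ (v' ++ q).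
    by rewrite -!catA.
  have -> : p ++ (u' ++ v') ++ q = (p ++ u') ++ (v' ++ q) by rewrite -!catA.
  exact: bs_free.
- have -> : p ++ (u' ++ relator k ++ v') ++ q = (p ++ u') ++ relator k ++ (v' ++ q).
    by rewrite -!catA.
  have -> : p ++ (u' ++ v') ++ q = (p ++ u') ++ (v' ++ q) by rewrite -!catA.
  exact: bs_rel.
Qed.

Lemma inv_letterK : involutive inv_letter. Proof. by case. Qed.

Lemma inv_wordK : involutive inv_word.
Proof. by move=> w; rewrite /inv_word map_rev revK (mapK inv_letterK). Qed.

Lemma inv_word_cons x p : inv_word (x :: p) = inv_word p ++ [:: inv_letter x].
Proof. by rewrite /inv_word /= rev_cons cats1. Qed.

Lemma inv_cancel k p : bs_eq k (inv_word p ++ p) [::].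
Proof.
elim: p => [|x p IH]; first exact: bs_refl.
rewrite inv_word_cons -catA.
apply: bs_trans IH.
have := @bs_free k (inv_word p) p (inv_letter x); rewrite inv_letterK; exact.
Qed.

Lemma cancel_inv k p : bs_eq k (p ++ inv_word p) [::].
Proof. by have := inv_cancel k (inv_word p); rewrite inv_wordK. Qed.

Lemma rot_conj k w i : bs_conj k w (rot i w).
Proof.
exists (inv_word (take i w)).
rewrite inv_wordK.
have -> : inv_word (take i w) ++ w ++ take i w =
  [::] ++ (inv_word (take i w) ++ take i w) ++ (drop i w ++ take i w).
  have E := cat_take_drop i w.
  move: (take i w) (drop i w) E => t d <-; by rewrite /= !catA.
exact: (bs_cong [::] (drop i w ++ take i w) (inv_cancel k (take i w))).
Qed.

Local Open Scope ring_scope.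

Definition sh (m h : nat) : nat := (h.+1 %% m)%N.
Definition sh' (m h : nat) : nat := ((h + m.-1) %% m)%N.

Fixpoint wval (m k h : nat) (w : word) : int :=
  match w with
  | [::] => 0
  | LA :: w' => (k%:Z) ^+ h + wval m k h w'
  | LAi :: w' => - (k%:Z) ^+ h + wval m k h w'
  | LT :: w' => wval m k (sh m h) w'
  | LTi :: w' => wval m k (sh' m h) w'
  end.

Fixpoint hgt (m h : nat) (w : word) : nat :=
  match w with
  | [::] => h
  | LT :: w' => hgt m (sh m h) w'
  | LTi :: w' => hgt m (sh' m h) w'
  | _ :: w' => hgt m h w'
  end.

Definition cong (K a b : int) := exists q : int, a - b = q * K.

Lemma cong_refl K a : cong K a a. Proof. by exists 0; rewrite subrr mul0r. Qed.
Lemma cong_sym K a b : cong K a b -> cong K b a.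
Proof. by case=> q e; exists (- q); rewrite mulNr -e opprB. Qed.
Lemma cong_trans K a b c : cong K a b -> cong K b c -> cong K a c.
Proof.
case=> q e; case=> q' e'; exists (q + q').
have -> : a - c = (a - b) + (b - c) by ring.
by rewrite e e' mulrDl.
Qed.
Lemma cong_add K a b c d : cong K a b -> cong K c d -> cong K (a + c) (b + d).
Proof.
case=> q e; case=> q' e'; exists (q + q').
have -> : a + c - (b + d) = (a - b) + (c - d) by ring.
by rewrite e e' mulrDl.
Qed.
Lemma cong_addl K a b c : cong K a b -> cong K (c + a) (c + b).
Proof. by move=> h; apply: cong_add => //; apply: cong_refl. Qed.
Lemma cong_mull K a b c : cong K a b -> cong K (c * a) (c * b).
Proof. by case=> q e; exists (c * q); rewrite -mulrBr e mulrA. Qed.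

Lemma sh_lt m h : (0 < m)%N -> (sh m h < m)%N.
Proof. by move=> hm; rewrite /sh ltn_mod. Qed.
Lemma sh'_lt m h : (0 < m)%N -> (sh' m h < m)%N.
Proof. by move=> hm; rewrite /sh' ltn_mod. Qed.
Lemma sh'sh m h : (h < m)%N -> sh' m (sh m h) = h.
Proof.
move=> hm; rewrite /sh /sh' modnDml.
have -> : (h.+1 + m.-1 = h + m)%N by lia.
by rewrite modnDr modn_small.
Qed.
Lemma shsh' m h : (h < m)%N -> sh m (sh' m h) = h.
Proof.
move=> hm; rewrite /sh /sh' -addn1 modnDml.
have -> : (h + m.-1 + 1 = h + m)%N by lia.
by rewrite modnDr modn_small.
Qed.

Lemma hgt_lt m h w : (0 < m)%N -> (h < m)%N -> (hgt m h w < m)%N.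
Proof.
move=> hm; elim: w h => [|[] w IH] h hh //=; apply: IH => //.
 exact: sh_lt. exact: sh'_lt.
Qed.

Lemma val_cat m k h u v : wval m k h (u ++ v) = wval m k h u + wval m k (hgt m h u) v.
Proof. by elim: u h => [|[] u IH] h /=; rewrite ?add0r ?IH ?addrA. Qed.

Lemma hgt_cat m h u v : hgt m h (u ++ v) = hgt m (hgt m h u) v.
Proof. by elim: u h => [|[] u IH] h /=; rewrite ?IH. Qed.

Lemma val_nseqA m k h n v : wval m k h (nseq n LAi ++ v) = - (n%:Z * (k%:Z) ^+ h) + wval m k h v.
Proof.
elim: n => [|n IH] /=; first by rewrite mul0r oppr0 add0r.
by rewrite IH -addn1 PoszD; ring.
Qed.
Lemma hgt_nseqA m h n v : hgt m h (nseq n LAi ++ v) = hgt m h v.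
Proof. by elim: n. Qed.

Lemma val_nseq m k h n : wval m k h (nseq n LAi) = - (n%:Z * (k%:Z) ^+ h).
Proof. by have := val_nseqA m k h n [::]; rewrite cats0 /= addr0. Qed.
Lemma hgt_nseq m h n : hgt m h (nseq n LAi) = h.
Proof. by elim: n. Qed.

Lemma kpow_sh m k h : (0 < m)%N -> (h < m)%N ->
  cong ((k%:Z)^+m - 1) ((k%:Z) ^+ (sh m h)) ((k%:Z) * (k%:Z)^+h).
Proof.
move=> hm hh; rewrite /sh -exprS.
case: (ltnP h.+1 m) => h1.
  by rewrite modn_small //; apply: cong_refl.
have -> : h.+1 = m by lia.
rewrite modnn expr0; exists (-1); ring.
Qed.

Definition isLT (l : letter) : bool := if l is LT then true else false.
Definition isLTi (l : letter) : bool := if l is LTi then true else false.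
Definition tc (w : word) : int := (count isLT w)%:Z - (count isLTi w)%:Z.

Lemma tc_cat u v : tc (u ++ v) = tc u + tc v.
Proof. rewrite /tc !count_cat !PoszD; ring. Qed.

Lemma tc_inv u : tc (inv_word u) = - tc u.
Proof.
rewrite /tc /inv_word !count_rev !count_map.
have E1 : count (preim inv_letter isLT) u = count isLTi u.
  by apply: eq_count; case.
have E2 : count (preim inv_letter isLTi) u = count isLT u.
  by apply: eq_count; case.
rewrite E1 E2; ring.
Qed.

Lemma bs_inv m k u v : (0 < m)%N -> bs_eq k u v ->
  tc u = tc v /\
  forall h, (h < m)%N -> hgt m h u = hgt m h v /\ cong ((k%:Z)^+m - 1) (wval m k h u) (wval m k h v).
Proof.
move=> hm; elim=> [w|u' v' _ [IH1 IH2]|u' v' w' _ [IH1 IH2] _ [IH3 IH4]|u' v' x|u' v'].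
- by split=> // h _; split=> //; apply: cong_refl.
- split=> // h hh; have [E C] := IH2 h hh; split=> //; exact: cong_sym.
- split; first by rewrite IH1.
  move=> h hh; have [E C] := IH2 h hh; have [E' C'] := IH4 h hh.
  by split; [rewrite E | apply: cong_trans C'].
- split; first by rewrite !tc_cat; case: x => /=; rewrite /tc /=; lia.
  move=> h hh; rewrite !val_cat !hgt_cat.
  have hl := hgt_lt u' hm hh.
  move: (hgt m h u') hl => g hg.
  case: x => /=; rewrite ?sh'sh ?shsh' //; split => //; by exists 0; ring.
- split; first by rewrite !tc_cat /relator /tc /= !count_nseq /=; lia.
  move=> h hh; rewrite !val_cat !hgt_cat.
  have hl := hgt_lt u' hm hh.
  move: (hgt m h u') hl => g hg.
  rewrite /relator /= val_nseq hgt_nseq sh'sh //; split => //.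
  apply: cong_addl.
  have [q e] := kpow_sh k hm hg.
  exists q; rewrite -e; ring.
Qed.

Local Open Scope ring_scope.

Lemma xword_cons x xs : xword (x :: xs) = apow x ++ LT :: xword xs.
Proof. by rewrite /xword /= -catA. Qed.
Lemma xword_cat s1 s2 : xword (s1 ++ s2) = xword s1 ++ xword s2.
Proof. by rewrite /xword map_cat flatten_cat. Qed.

Lemma val_nseqLA m k h n v : wval m k h (nseq n LA ++ v) = n%:Z * (k%:Z) ^+ h + wval m k h v.
Proof.
elim: n => [|n IH] /=; first by rewrite mul0r add0r.
by rewrite IH -addn1 PoszD; ring.
Qed.
Lemma hgt_nseqLA m h n v : hgt m h (nseq n LA ++ v) = hgt m h v.
Proof. by elim: n. Qed.

Lemma val_apow m k h x v : wval m k h (apow x ++ v) = x * (k%:Z) ^+ h + wval m k h v.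
Proof.
rewrite /apow; case: ifP => hx.
  by rewrite val_nseqLA abszE ger0_norm.
rewrite val_nseqA abszE ltr0_norm ?mulNr ?opprK //.
by rewrite ltNge hx.
Qed.
Lemma hgt_apow m h x v : hgt m h (apow x ++ v) = hgt m h v.
Proof. by rewrite /apow; case: ifP => _; [apply: hgt_nseqLA | apply: hgt_nseqA]. Qed.

Lemma hgt_xword m h xs : (h < m)%N -> hgt m h (xword xs) = ((h + size xs) %% m)%N.
Proof.
move=> hh; elim: xs h hh => [|x xs IH] h hh /=.
  by rewrite addn0 modn_small.
rewrite xword_cons hgt_apow /= IH; last by apply: sh_lt; lia.
by rewrite /sh modnDml addSnnS.
Qed.

Lemma val_xword m k h xs : (h + size xs <= m)%N ->
  wval m k h (xword xs) = \sum_(i < size xs) xs`_i * (k%:Z) ^+ (h + i).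
Proof.
elim: xs h => [|x xs IH] h hs /=; first by rewrite big_ord0.
rewrite xword_cons val_apow /= big_ord_recl /= addn0.
congr (_ + _).
case: xs IH hs => [|y ys] IH hs; first by rewrite big_ord0.
have -> : sh m h = h.+1 by rewrite /sh modn_small //=; move: hs => /=; lia.
rewrite IH; last by move: hs => /=; lia.
by apply: eq_bigr => i _; rewrite /bump /= addSnnS.
Qed.

Definition isA (l : letter) : bool := if l is LA then true else if l is LAi then true else false.

Lemma size_count w : size w = (count isA w + count isLT w + count isLTi w)%N.
Proof. elim: w => [|[] w IH] //=; rewrite IH; lia. Qed.

Lemma size_xword xs : (size (xword xs))%:Z = (size xs)%:Z + \sum_(x <- xs) `|x|.
Proof.
elim: xs => [|x xs IH]; first by rewrite big_nil.
rewrite xword_cons size_cat /= big_cons -addn1 !PoszD IH.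
have -> : (size (apow x))%:Z = `|x|.
  by rewrite /apow; case: ifP => _; rewrite size_nseq abszE.
ring.
Qed.

Lemma tc_xword xs : tc (xword xs) = (size xs)%:Z.
Proof.
elim: xs => [|x xs IH] //.
rewrite xword_cons tc_cat /= -cat1s tc_cat IH.
have -> : tc (apow x) = 0 by rewrite /apow /tc; case: ifP => _; rewrite !count_nseq /= !mul0n.
rewrite /tc /= -addn1 PoszD; ring.
Qed.

Local Open Scope ring_scope.

Definition Dn (k n : nat) (y : nat -> int) : int := \sum_(i < n) y i * (k%:Z) ^+ i.
Definition nrm (n : nat) (y : nat -> int) : int := \sum_(i < n) `|y i|.
Definition bal (r n : nat) (y : nat -> int) := forall i, (i < n)%N -> `|y i| <= r%:Z.

Lemma kpos (k n : nat) : 0 <= (k%:Z) ^+ n.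
Proof. exact: exprn_ge0. Qed.

Lemma D_bound r n y : bal r n y ->
  2 * `|Dn (2 * r + 1) n y| <= ((2 * r + 1)%N%:Z) ^+ n - 1.
Proof.
elim: n => [|n IH] hb; first by rewrite /Dn big_ord0 normr0 mulr0 expr0 subrr.
rewrite /Dn big_ord_recr /=.
have IH' := IH (fun i hi => hb i (ltnW hi)).
rewrite /Dn in IH'.
set S := \sum_(i < n) _ in IH' *.
have hy := hb n (ltnSn n).
have kp := kpos (2 * r + 1) n.
set P := ((2 * r + 1)%N%:Z) ^+ n in kp hy IH' *.
have e : ((2 * r + 1)%N%:Z) ^+ n.+1 = (2 * r%:Z + 1) * P.
  by rewrite exprS /P; congr (_ * _); lia.
rewrite e.
have h1 : `|S + y n * P| <= `|S| + `|y n| * P.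
  by have := ler_normD S (y n * P); rewrite normrM (ger0_norm kp).
have h2 : `|y n| * P <= r%:Z * P by apply: ler_wpM2r.
lra.
Qed.

Lemma D_inj r n y z : bal r n y -> bal r n z -> Dn (2 * r + 1) n y = Dn (2 * r + 1) n z ->
  forall i, (i < n)%N -> y i = z i.
Proof.
elim: n => [|n IH] hy hz; first by [].
have hy' : bal r n y by move=> i hi; apply: hy; lia.
have hz' : bal r n z by move=> i hi; apply: hz; lia.
have By := D_bound hy'; have Bz := D_bound hz'.
rewrite /Dn !big_ord_recr /= => E.
have kp := kpos (2 * r + 1) n.
set P := ((2 * r + 1)%N%:Z) ^+ n in kp By Bz E *.
have En : y n = z n.
  apply/eqP; apply: contraT => ne.
  have h0 : 0 < `|y n - z n| by rewrite normr_gt0 subr_eq0.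
  have h1 : 1 <= `|y n - z n| by lia.
  have h2 : P <= `|y n - z n| * P by rewrite -{1}(mul1r P) ler_wpM2r.
  have h3 : (y n - z n) * P = Dn (2 * r + 1) n z - Dn (2 * r + 1) n y.
    rewrite /Dn; move: E; rewrite /P => E; lra.
  have h4 : `|Dn (2 * r + 1) n z - Dn (2 * r + 1) n y| <=
            `|Dn (2 * r + 1) n z| + `|Dn (2 * r + 1) n y| by apply: ler_normB.
  rewrite -[P]ger0_norm // -normrM h3 in h2.
  rewrite ger0_norm // in h2.
  lra.
move=> i; rewrite ltnS leq_eqVlt => /orP [/eqP -> //|hi].
apply: IH => //.
rewrite /Dn; move: E; rewrite En => E; lra.
Qed.

Lemma D_const r n (c : int) : 2 * r%:Z * Dn (2 * r + 1) n (fun _ => c) = c * (((2 * r + 1)%N%:Z) ^+ n - 1).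
Proof.
elim: n => [|n IH]; first by rewrite /Dn big_ord0 expr0; ring.
rewrite /Dn big_ord_recr /= mulrDr.
rewrite /Dn in IH; rewrite IH exprS.
have -> : (2 * r + 1)%N%:Z = 2 * r%:Z + 1 by lia.
ring.
Qed.

Local Open Scope ring_scope.

Lemma Kpos r m : (1 <= r)%N -> (0 < m)%N -> 2 <= ((2 * r + 1)%N%:Z) ^+ m - 1.
Proof.
move=> hr hm.
have : 3 <= ((2 * r + 1)%N%:Z) ^+ m.
  case: m hm => // m _; rewrite exprS.
  have h1 : 1 <= ((2 * r + 1)%N%:Z) ^+ m by apply: exprn_ege1; lia.
  have h3 : 3 <= (2 * r + 1)%N%:Z by lia.
  nra.
lra.
Qed.

Lemma bal_const r m (c : int) : `|c| <= r%:Z -> bal r m (fun _ => c).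
Proof. by move=> h i _. Qed.

Lemma D_eq_const r m y (c : int) : (1 <= r)%N -> bal r m y -> `|c| <= r%:Z ->
  2 * r%:Z * Dn (2 * r + 1) m y = c * (((2 * r + 1)%N%:Z) ^+ m - 1) ->
  forall i, (i < m)%N -> y i = c.
Proof.
move=> hr hy hc E i hi.
suff H : Dn (2 * r + 1) m y = Dn (2 * r + 1) m (fun _ => c).
  exact: (D_inj hy (@bal_const r m c hc) H hi).
have := D_const r m c; rewrite -E => E2.
have rp : 0 < 2 * r%:Z by lia.
by apply: (mulfI (lt0r_neq0 rp)); rewrite E2.
Qed.

Lemma cong_uniq r m y z : (1 <= r)%N -> (0 < m)%N -> bal r m y -> bal r m z ->
  cong (((2 * r + 1)%N%:Z) ^+ m - 1) (Dn (2 * r + 1) m y) (Dn (2 * r + 1) m z) ->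
  (forall i, (i < m)%N -> y i = z i) \/
  ((forall i, (i < m)%N -> y i = r%:Z) /\ (forall i, (i < m)%N -> z i = - r%:Z)) \/
  ((forall i, (i < m)%N -> y i = - r%:Z) /\ (forall i, (i < m)%N -> z i = r%:Z)).
Proof.
move=> hr hm hy hz [q E].
have KP := Kpos hr hm.
have By := D_bound hy; have Bz := D_bound hz.
have cr : `|r%:Z| <= r%:Z by rewrite ger0_norm.
have cnr : `|- r%:Z| <= r%:Z by rewrite normrN ger0_norm.
have Ey := @D_eq_const r m y; have Ez := @D_eq_const r m z.
move: Ey Ez.
set K := ((2 * r + 1)%N%:Z) ^+ m - 1 in KP By Bz E *.
set Dy := Dn (2 * r + 1) m y in By E *.
set Dz := Dn (2 * r + 1) m z in Bz E *.
move=> Ey Ez.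
have a1 := ler_norm Dy; have a2 := ler_norm (- Dy); rewrite normrN in a2.
have a3 := ler_norm Dz; have a4 := ler_norm (- Dz); rewrite normrN in a4.
have [q0|qn] := eqVneq q 0.
  left; apply: (D_inj hy hz); rewrite -/Dy -/Dz.
  by apply/eqP; rewrite -subr_eq0 E q0 mul0r.
right.
have [qp|qneg] := ltrP 0 q.
  have hq : K <= q * K by rewrite -{1}(mul1r K) ler_wpM2r //; lra.
  have e1 : 2 * Dy = K by lra.
  have e2 : 2 * Dz = - K by lra.
  left; split.
    apply: Ey => //; rewrite mulrAC e1; ring.
  apply: Ez => //; rewrite mulrAC e2; ring.
have qm : q <= -1 by move: qn qneg; lia.
have hq : q * K <= - K.
  by rewrite -mulN1r ler_wpM2r //; lra.
have e1 : 2 * Dy = - K by lra.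
have e2 : 2 * Dz = K by lra.
right; split.
  apply: Ey => //; rewrite mulrAC e1; ring.
apply: Ez => //; rewrite mulrAC e2; ring.
Qed.

Local Open Scope ring_scope.

Lemma sum_upd n h (f g : nat -> int) : (h < n)%N -> (forall i, i != h -> f i = g i) ->
  \sum_(i < n) f i = \sum_(i < n) g i + f h - g h.
Proof.
move=> hh E.
rewrite [LHS](bigD1 (Ordinal hh)) //= [in RHS](bigD1 (Ordinal hh)) //=.
rewrite [in LHS](eq_bigr (fun i : 'I_n => g i)); first ring.
move=> i hi; apply: E; apply: contra hi => /eqP e.
by apply/eqP; apply: val_inj.
Qed.

Definition upd (y : nat -> int) (h : nat) (v : int) : nat -> int :=
  fun i => if i == h then v else y i.

Lemma upd_ne y h v i : i != h -> upd y h v i = y i.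
Proof. by rewrite /upd => /negbTE ->. Qed.
Lemma upd_eq y h v : upd y h v h = v.
Proof. by rewrite /upd eqxx. Qed.

Lemma D_upd k n y h v : (h < n)%N ->
  Dn k n (upd y h v) = Dn k n y + v * (k%:Z) ^+ h - y h * (k%:Z) ^+ h.
Proof.
move=> hh; rewrite /Dn.
have E := @sum_upd n h (fun i => upd y h v i * (k%:Z) ^+ i) (fun i => y i * (k%:Z) ^+ i) hh.
cbv beta in E; rewrite E ?upd_eq //.
by move=> i hi; rewrite upd_ne.
Qed.

Lemma nrm_upd n y h v : (h < n)%N -> nrm n (upd y h v) = nrm n y + `|v| - `|y h|.
Proof.
move=> hh; rewrite /nrm.
have E := @sum_upd n h (fun i => `|upd y h v i|) (fun i => `|y i|) hh.
cbv beta in E; rewrite E ?upd_eq //.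
by move=> i hi; rewrite upd_ne.
Qed.

Definition cnt (r n : nat) (y : nat -> int) : int :=
  \sum_(i < n) (if y i == r%:Z then 1 else 0).

Lemma cnt_upd r n y h v : (h < n)%N -> cnt r n (upd y h v) =
  cnt r n y + (if v == r%:Z then 1 else 0) - (if y h == r%:Z then 1 else 0).
Proof.
move=> hh; rewrite /cnt.
have E := @sum_upd n h (fun i => if upd y h v i == r%:Z then 1 else 0)
   (fun i => if y i == r%:Z then 1 else 0) hh.
cbv beta in E; rewrite E ?upd_eq //.
by move=> i hi; rewrite upd_ne.
Qed.

Lemma cnt_ge0 r n y : 0 <= cnt r n y.
Proof. by apply: sumr_ge0 => i _; case: ifP. Qed.

Lemma add_unit r m y h : (1 <= r)%N -> (0 < m)%N -> bal r m y -> (h < m)%N ->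
  exists y', bal r m y' /\
    cong (((2 * r + 1)%N%:Z) ^+ m - 1) (Dn (2 * r + 1) m y + ((2 * r + 1)%N%:Z) ^+ h)
         (Dn (2 * r + 1) m y') /\
    nrm m y' <= nrm m y + 1.
Proof.
move=> hr hm.
suff H : forall N : nat, forall y h, bal r m y -> (h < m)%N -> cnt r m y < N%:Z ->
  exists y', bal r m y' /\
    cong (((2 * r + 1)%N%:Z) ^+ m - 1) (Dn (2 * r + 1) m y + ((2 * r + 1)%N%:Z) ^+ h)
         (Dn (2 * r + 1) m y') /\
    nrm m y' <= nrm m y + 1.
  move=> hy hh; apply: (H (absz (cnt r m y)).+1) => //.
  have := cnt_ge0 r m y; lia.
elim=> [|N IH] {}y {}h hy hh hc; first by have := cnt_ge0 r m y; lia.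
have [eyr|nyr] := eqVneq (y h) r%:Z.
  (* carry *)
  set y2 := upd y h (- r%:Z).
  have hy2 : bal r m y2.
    move=> i hi; rewrite /y2 /upd; case: ifP => _; last exact: hy.
    by rewrite normrN ger0_norm.
  have hc2 : cnt r m y2 < N%:Z.
    rewrite /y2 cnt_upd // eyr eqxx.
    have -> : (- r%:Z == r%:Z) = false by apply/negbTE; lia.
    lia.
  have [y' [hy' [hcg hn]]] := IH y2 (sh m h) hy2 (sh_lt h hm) hc2.
  exists y'; split => //; split.
    apply: cong_trans hcg.
    have [q e] := kpow_sh (2 * r + 1) hm hh.
    exists (- q).
    rewrite /y2 D_upd // eyr.
    move: e; set K := (_ ^+ m - 1) => e. set P := _ ^+ h in e *. transitivity (- (q * K)); last ring. rewrite -e; ring.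
  move: hn; rewrite /y2 nrm_upd // eyr normrN; lra.
exists (upd y h (y h + 1)); split.
  move=> i hi; rewrite /upd; case: ifP => [_|_]; last exact: hy.
  have := hy h hh; move: nyr; lia.
split.
  rewrite D_upd //; exists 0; ring.
rewrite nrm_upd //.
have := ler_normD (y h) 1; rewrite normr1; lra.
Qed.

Local Open Scope ring_scope.

Lemma sub_unit r m y h : (1 <= r)%N -> (0 < m)%N -> bal r m y -> (h < m)%N ->
  exists y', bal r m y' /\
    cong (((2 * r + 1)%N%:Z) ^+ m - 1) (Dn (2 * r + 1) m y - ((2 * r + 1)%N%:Z) ^+ h)
         (Dn (2 * r + 1) m y') /\
    nrm m y' <= nrm m y + 1.
Proof.
move=> hr hm hy hh.
have hyn : bal r m (fun i => - y i) by move=> i hi; rewrite normrN; apply: hy.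
have [y' [hy' [[q e] hn]]] := add_unit hr hm hyn hh.
exists (fun i => - y' i); split.
  by move=> i hi; rewrite normrN; apply: hy'.
have DN : forall z, Dn (2 * r + 1) m (fun i => - z i) = - Dn (2 * r + 1) m z.
  by move=> z; rewrite /Dn -sumrN; apply: eq_bigr => i _; rewrite mulNr.
have NN : forall z, nrm m (fun i => - z i) = nrm m z.
  by move=> z; rewrite /nrm; apply: eq_bigr => i _; rewrite normrN.
split.
  exists (- q); rewrite DN mulNr -e DN; ring.
by rewrite NN; rewrite NN in hn.
Qed.

Lemma walk r m w h : (1 <= r)%N -> (0 < m)%N -> (h < m)%N ->
  exists y, bal r m y /\
    cong (((2 * r + 1)%N%:Z) ^+ m - 1) (wval m (2 * r + 1) h w) (Dn (2 * r + 1) m y) /\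
    nrm m y <= (count isA w)%:Z.
Proof.
move=> hr hm; elim: w h => [|l w IH] h hh.
  exists (fun _ => 0); split; first by move=> i _; rewrite normr0.
  split; first by exists 0; rewrite /Dn /= big1 ?subr0 ?mul0r // => i _; rewrite mul0r.
  by rewrite /nrm big1 // => i _; rewrite normr0.
case: l => /=.
- have [y [hy [c hn]]] := IH h hh.
  have [y' [hy' [c' hn']]] := add_unit hr hm hy hh.
  exists y'; split => //; split.
    apply: cong_trans c'; rewrite [X in cong _ X _]addrC; apply: cong_add => //; exact: cong_refl.
  rewrite -addn1 PoszD; lra.
- have [y [hy [c hn]]] := IH h hh.
  have [y' [hy' [c' hn']]] := sub_unit hr hm hy hh.
  exists y'; split => //; split.
    apply: cong_trans c'; rewrite [X in cong _ X _]addrC; apply: cong_add => //; exact: cong_refl.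
  rewrite -addn1 PoszD; lra.
- exact: IH (sh_lt h hm).
- exact: IH (sh'_lt h hm).
Qed.

Local Open Scope ring_scope.

Lemma perm_rot' (T : eqType) j (s : seq T) : perm_eq (rot j s) s.
Proof. by rewrite perm_rot perm_refl. Qed.

Lemma wval_rot m k xs h : (0 < m)%N -> size xs = m -> (h < m)%N ->
  wval m k h (xword xs) = wval m k 0 (xword (rot (m - h) xs)).
Proof.
move=> hm hs hh.
set j := (m - h)%N.
have sj : size (take j xs) = j by rewrite size_take hs; case: ifP => //; lia.
have sd : size (drop j xs) = h by rewrite size_drop hs /j; lia.
rewrite -{1}(cat_take_drop j xs) /rot !xword_cat !val_cat.
rewrite !hgt_xword // sj sd add0n.
have -> : ((h + j) %% m = 0)%N by rewrite /j subnKC ?modnn //; lia.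
rewrite (modn_small hh) addrC //.
Qed.

Lemma wval_xword0 m k zs : size zs = m ->
  wval m k 0 (xword zs) = Dn k m (fun i => zs`_i).
Proof.
move=> hs; rewrite val_xword ?hs ?add0n //.
Qed.

Lemma conj_val r m xs v : (0 < m)%N -> size xs = m ->
  bs_conj (2 * r + 1) (xword xs) v ->
  exists j, cong (((2 * r + 1)%N%:Z) ^+ m - 1) (wval m (2 * r + 1) 0 v)
              (wval m (2 * r + 1) 0 (xword (rot j xs))) /\ tc v = m%:Z.
Proof.
move=> hm hs [u E].
have [T1 I1] := bs_inv hm E.
have [_ C1] := I1 0%N hm.
have [_ C2] := (bs_inv hm (cancel_inv (2 * r + 1) u)).2 0%N hm.
set h1 := hgt m 0 u.
have hh1 : (h1 < m)%N by apply: hgt_lt.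
exists (m - h1)%N; split.
  rewrite -wval_rot //.
  apply: cong_trans (cong_sym C1) _.
  rewrite !val_cat -/h1 hgt_xword // hs modnDr modn_small // in C2 *.
  case: C2 => q e; exists q; rewrite /= in e; rewrite -[q * _]subr0 -e; ring.
by rewrite -T1 !tc_cat tc_inv tc_xword hs; ring.
Qed.

Lemma bal_seq r m zs : size zs = m -> (forall x, x \in zs -> `|x| <= r%:Z) ->
  bal r m (fun i => zs`_i).
Proof. by move=> hs hz i hi; apply: hz; apply: mem_nth; rewrite hs. Qed.

Lemma nrm_seq m zs : size zs = m -> nrm m (fun i => zs`_i) = \sum_(x <- zs) `|x|.
Proof. by move=> hs; rewrite (big_nth 0) big_mkord hs. Qed.

Lemma all_r_seq m zs (c : int) : size zs = m -> (forall i, (i < m)%N -> zs`_i = c) ->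
  zs = nseq m c.
Proof.
move=> hs hc; apply/(@eq_from_nth _ 0); first by rewrite size_nseq.
by move=> i hi; rewrite nth_nseq -hs hi hc // -hs.
Qed.

Lemma xword_nseq m (c : int) : xword (nseq m c) = flatten (nseq m (apow c ++ [:: LT])).
Proof. by rewrite /xword map_nseq. Qed.

Lemma nrm_cases r m y z :
  ((forall i, (i < m)%N -> y i = z i) \/
  ((forall i, (i < m)%N -> y i = r%:Z) /\ (forall i, (i < m)%N -> z i = (- r%:Z)%R)) \/
  ((forall i, (i < m)%N -> y i = (- r%:Z)%R) /\ (forall i, (i < m)%N -> z i = r%:Z))) ->
  nrm m y = nrm m z.
Proof.
rewrite /nrm => [[E|[[E1 E2]|[E1 E2]]]]; apply: eq_bigr => i _.
- by rewrite E.
- by rewrite E1 // E2 // normrN.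
- by rewrite E1 // E2 // normrN.
Qed.


Local Close Scope ring_scope.


Theorem lemma4p4 (r m : nat) (hr : 1 <= r) (hm : 0 < m) :
  (forall w v : word, Aset r m w -> Aset r m v ->
     (bs_conj (2 * r + 1) w v <-> cyclic_perm w v))
  /\ (forall w : word, Aset r m w -> conj_geodesic (2 * r + 1) w).
Proof.
have CM : forall w v, Aset r m w -> bs_conj (2 * r + 1) w v -> size w <= size v.
  move=> w v [[xs [hs [hb ->]]] _] hc.
  have [j [C T]] := conj_val hm hs hc.
  have [y [hy [Cy Ny]]] := walk v hr hm hm.
  have sz : size (rot j xs) = m by rewrite size_rot.
  rewrite wval_xword0 // in C.
  have hz : bal r m (fun i => nth 0%R (rot j xs) i).
    by apply: bal_seq => // x; rewrite mem_rot; apply: hb.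
  have U := cong_uniq hr hm hy hz (cong_trans (cong_sym Cy) C).
  have NE := nrm_cases U.
  rewrite nrm_seq // (perm_big _ (perm_rot' j xs)) in NE.
  have S1 := size_xword xs; rewrite hs in S1.
  have S2 := size_count v.
  move: T; rewrite /tc => T.
  have NE2 : nrm m y = (\sum_(x <- xs) `|x|)%R by rewrite NE.
  clear NE; rewrite -lez_nat; lia.
split.
  move=> w v hw hv; split; last by case=> i <-; apply: rot_conj.
  case: hw => [[xs [hs [hb Ew]]] nw]; case: hv => [[ys [hys [hyb Ev]]] nv].
  subst w v => hc.
  have [j [C _]] := conj_val hm hs hc.
  have sz : size (rot j xs) = m by rewrite size_rot.
  rewrite !wval_xword0 // in C.
  have hz : bal r m (fun i => nth 0%R (rot j xs) i).
    by apply: bal_seq => // x; rewrite mem_rot; apply: hb.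
  have hy := bal_seq hys hyb.
  have [E|[[E1 E2]|[E1 E2]]] := cong_uniq hr hm hy hz C.
  - have -> : ys = rot j xs.
      apply: (@eq_from_nth _ 0%R); first by rewrite hys sz.
      by move=> i hi; apply: E; rewrite -hys.
    exists (size (xword (take j xs))).
    have -> : xword (rot j xs) = xword (drop j xs) ++ xword (take j xs) by rewrite /rot xword_cat.
    have Ex : xword xs = xword (take j xs) ++ xword (drop j xs) by rewrite -xword_cat cat_take_drop.
    by rewrite [X in rot _ X]Ex rot_size_cat.
  - exfalso; apply: nw.
    have Hr := all_r_seq sz E2.
    have : all (pred1 (- r%:Z)%R) xs.
      by rewrite -(perm_all _ (perm_rot' j xs)) Hr; apply/all_pred1P; rewrite size_nseq.
    by move/all_pred1P; rewrite hs => ->; rewrite xword_nseq.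
  - exfalso; apply: nv.
    by rewrite (all_r_seq hys E1) xword_nseq.
move=> w hw; split; last by move=> v; apply: CM.
move=> v hv; apply: CM => //; exists [::].
by rewrite /= /inv_word /= cats0.
Qed.
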